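(* Let $G$ be a locally compact group with Haar measure $\nu$ and $U$ an open symmetric relatively compact neighborhood of the identity. For every $n\in\mathbb N$ there exists a regular compact set $K$ with $U^n\subseteq K\subseteq U^{n+1}$ and $\nu(\partial K)=0$.
   Context: A compact set is regular if it equals the closure of its interior. $\partial K$ is the topological boundary of $K$; $U^m$ is the set of products of $m$ elements of $U$. *)

(* Defs.v *)
From HB Require Import structures.
From mathcomp Require Import all_boot all_order all_algebra.
From mathcomp Require Import all_classical all_reals all_analysis.
Set Implicit Arguments. Unset Strict Implicit. Unset Printing Implicit Defensive.
Import Order.TTheory GRing.Theory Num.Theory.
Local Open Scope classical_set_scope.
Local Open Scope ring_scope.

Definition topological_group (G : ptopologicalType)
    (mul : G -> G -> G) (inv : G -> G) (e : G) : Prop :=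
  [/\ (forall x y z, mul x (mul y z) = mul (mul x y) z),
      (forall x, mul e x = x /\ mul x e = x),
      (forall x, mul (inv x) x = e /\ mul x (inv x) = e),
      continuous (fun p : G * G => mul p.1 p.2) &
      continuous inv].

Definition locally_compact_group (G : ptopologicalType)
    (mul : G -> G -> G) (inv : G -> G) (e : G) : Prop :=
  [/\ topological_group mul inv e, hausdorff_space G & locally_compact [set: G]].

Notation borel G := (g_sigma_algebraType (@open G)).

Definition haar_measure (R : realType) (G : ptopologicalType)
    (mul : G -> G -> G) (nu : {measure set (borel G) -> \bar R}) : Prop :=
  [/\ (forall (g : G) (A : set G), measurable (A : set (borel G)) ->
         nu (mul g @` A) = nu A),
      (forall K : set G, compact K -> (nu K < +oo)%E),
      (forall O : set G, open O -> O !=set0 -> (0 < nu O)%E),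
      (forall A : set G, measurable (A : set (borel G)) ->
         nu A = ereal_inf [set nu O | O in [set O : set G | open O /\ A `<=` O]]) &
      (forall O : set G, open O ->
         nu O = ereal_sup [set nu K | K in [set K : set G | compact K /\ K `<=` O]])].

Fixpoint setpow (G : Type) (mul : G -> G -> G) (e : G) (U : set G) (m : nat)
    : set G :=
  match m with
  | 0%N => [set e]
  | m'.+1 => [set y | exists x u, [/\ setpow mul e U m' x, U u & y = mul x u]]
  end.

Definition boundary (T : topologicalType) (A : set T) : set T :=
  closure A `\` interior A.

Definition regular_compact (T : topologicalType) (K : set T) : Prop :=
  compact K /\ K = closure (interior K).

(* Main.v *)
Require Import Defs.
From HB Require Import structures.
From mathcomp Require Import all_boot all_order all_algebra.
From mathcomp Require Import all_classical all_reals all_analysis.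
From mathcomp Require Import finmap.
Import Order.TTheory GRing.Theory Num.Theory.
Local Open Scope classical_set_scope.
Local Open Scope ring_scope.
Import numFieldNormedType.Exports.

Section Grp.
Variables (G : ptopologicalType) (mul : G -> G -> G) (inv : G -> G) (e : G).
Hypothesis TG : topological_group mul inv e.

Lemma gA x y z : mul x (mul y z) = mul (mul x y) z.
Proof. by case: TG. Qed.
Lemma g1l x : mul e x = x. Proof. by case: TG => _ H _ _ _; case: (H x). Qed.
Lemma g1r x : mul x e = x. Proof. by case: TG => _ H _ _ _; case: (H x). Qed.
Lemma gVl x : mul (inv x) x = e. Proof. by case: TG => _ _ H _ _; case: (H x). Qed.
Lemma gVr x : mul x (inv x) = e. Proof. by case: TG => _ _ H _ _; case: (H x). Qed.

Lemma gKl x y : mul (inv x) (mul x y) = y.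
Proof. by rewrite gA gVl g1l. Qed.
Lemma gKr x y : mul x (mul (inv x) y) = y.
Proof. by rewrite gA gVr g1l. Qed.

Lemma ginv_uniq y z : mul y z = e -> z = inv y.
Proof. by move=> h; rewrite -(gKl y z) h g1r. Qed.

Lemma ginv_mul x a : inv (mul (inv x) a) = mul (inv a) x.
Proof.
apply/esym/ginv_uniq.
by rewrite -gA (gA a) gVr g1l gVl.
Qed.

Lemma cont_lmul c : continuous (mul c).
Proof.
have hc : continuous (fun p : G * G => mul p.1 p.2) by case: TG.
have -> : mul c = (fun p : G * G => mul p.1 p.2) \o (fun z => (c, z)) by [].
move=> x; apply: continuous_comp; last exact: hc.
by apply: cvg_pair; [exact: cvg_cst | exact: cvg_id].
Qed.


Variable U : set G.
Hypotheses (oU : open U) (Ue : U e) (Usym : forall x, U x -> U (inv x)).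

Lemma nbhs_transU c y : U (mul c y) -> nbhs y [set z | U (mul c z)].
Proof.
move=> h; have hc : mul c @ y --> mul c y by exact: cont_lmul.
by apply: hc; apply: open_nbhs_nbhs; split.
Qed.

Lemma setpowS_open m : open (setpow mul e U m.+1).
Proof.
rewrite openE => y [x [u [Px Uu ->]]].
rewrite /interior.
have := @nbhs_transU (inv x) (mul x u); rewrite gKl => /(_ Uu).
apply: filterS => z /= Hz.
by exists x, (mul (inv x) z); split => //; rewrite gKr.
Qed.

Lemma closure_setpow m : closure (setpow mul e U m) `<=` setpow mul e U m.+1.
Proof.
move=> x clx.
have := @nbhs_transU (inv x) x; rewrite gVl => /(_ Ue) /clx [a [Pa Ua]].
exists a, (mul (inv a) x); split => //; last by rewrite gKr.
by rewrite -ginv_mul; apply: Usym.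
Qed.

Lemma setpow_sub (V W : set G) m : V `<=` W -> setpow mul e V m `<=` setpow mul e W m.
Proof.
move=> VW; elim: m => [//|m IH] y [x [u [Px Vu ->]]].
by exists x, u; split => //; [exact: IH | exact: VW].
Qed.

Lemma setpow_compact (V : set G) m : compact V -> compact (setpow mul e V m).
Proof.
move=> cV; elim: m => [|m IH]; first exact: compact_set1.
have -> : setpow mul e V m.+1 =
  (fun p : G * G => mul p.1 p.2) @` (setpow mul e V m `*` V).
  apply/seteqP; split => y.
    by case=> x [u [Px Vu ->]]; exists (x, u).
  by case=> -[x u] [/= Px Vu] <-; exists x, u.
apply: continuous_compact; last exact: compact_setX.
by apply: continuous_subspaceT; case: TG.
Qed.

End Grp.

Lemma level_null d (T : measurableType d) (R : realType)
  (mu : {measure set T -> \bar R}) (g : T -> R) (D : set T) :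
  measurable D -> (mu D < +oo)%E ->
  (forall t, measurable (D `&` g @^-1` [set t])) ->
  exists t, (2^-1 < t < 1) /\ mu (D `&` g @^-1` [set t]) = 0%E.
Proof.
move=> mD Dfin mA.
apply: contrapT => hneg.
pose A t := D `&` g @^-1` [set t].
have finA t : mu (A t) \is a fin_num.
  rewrite ge0_fin_numE ?measure_ge0 //; apply: le_lt_trans Dfin.
  by apply: le_measure; rewrite ?in_setE //; [exact: mA | move=> x []].
have pos t : 2^-1 < t < 1 -> (0 < mu (A t))%E.
  move=> ht; rewrite lt0e measure_ge0 andbT; apply/eqP => h0.
  by apply: hneg; exists t.
pose S k := [set t | (k.+1%:R^-1)%:E < mu (A t)]%E.
have Sfin k : finite_set (S k).
  apply: contrapT => /infiniteP /pcard_leP /injfunPex[/= q q_fun q_inj].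
  have mq i : measurable (A (q i)) by exact: mA.
  have hU : (mu (\bigcup_i A (q i)) <= mu D)%E.
    apply: le_measure; rewrite ?in_setE //; first exact: bigcup_measurable.
    by move=> x [i _ []].
  move: hU; rewrite measure_bigcup //; last first.
    move=> i j _ _ [x [[_ /= h1] [_ /= h2]]].
    by apply: q_inj; rewrite ?in_setE //; rewrite -h1 -h2.
  set M := fine (mu D).
  pose m := (k.+1 * Num.Def.archi_bound M)%N.
  move/(le_trans (nneseries_lim_ge m _)) => /(_ (fun i _ _ => measure_ge0 _ _)).
  have hD : mu D = M%:E by rewrite fineK // ge0_fin_numE ?measure_ge0.
  rewrite hD; apply/negP; rewrite -ltNge.
  apply: (@lt_le_trans _ _ (\sum_(0 <= i < m | i \in [set: nat]) (k.+1%:R^-1)%:E)%E).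
    rewrite big_mkcond /= (eq_bigr (fun=> (k.+1%:R^-1)%:E)); last by move=> i _; rewrite in_setT.
    rewrite sumEFin sumr_const_nat subn0 lte_fin.
    rewrite /m mulrnA (_ : k.+1%:R^-1 *+ k.+1 = 1 :> R); last by rewrite -(mulr_natr (k.+1%:R^-1)) mulVf ?pnatr_eq0.
    by apply: archi_boundP; rewrite fine_ge0 ?measure_ge0.
  apply: lee_sum => i _.
  by apply/ltW; apply: q_fun.
have cover : `]2^-1, 1[%classic `<=` \bigcup_k S k.
  move=> t; rewrite /= in_itv /= => ht; have := pos t ht; have := finA t.
  move=> fx; rewrite -(fineK fx) lte_fin => px.
  case: (ltr_add_invr px) => k hk; exists k => //.
  by rewrite /S /= -(fineK fx) lte_fin; rewrite add0r in hk.
have ctbl : countable (\bigcup_k S k).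
  by apply: bigcup_countable => // k _; exact: finite_set_countable.
have : lebesgue_measure (`]2^-1, 1[%classic : set R) = 0%E.
  apply: countable_lebesgue_measure0; apply: sub_countable ctbl.
  exact: subset_card_le.
have h21 : 2^-1 < 1 :> R by rewrite invf_lt1 ?ltr1n.
rewrite lebesgue_measure_itv /= lte_fin h21 => /eqP; rewrite eqe subr_eq0.
by move/eqP => h; move: h21; rewrite -h ltxx.
Qed.

Lemma bigmin_props (X : topologicalType) (R : realType) (F : X -> X -> R) (s : seq X) :
  (forall i, i \in s -> continuous (F i) /\ forall x, 0 <= F i x <= 1) ->
  [/\ continuous (fun x => \big[Order.min/1]_(i <- s) F i x),
      forall x, 0 <= \big[Order.min/1]_(i <- s) F i x <= 1,
      forall x i, i \in s -> F i x < 2^-1 -> \big[Order.min/1]_(i <- s) F i x < 2^-1 &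
      forall x, (forall i, i \in s -> F i x = 1) -> \big[Order.min/1]_(i <- s) F i x = 1].
Proof.
elim: s => [_|j s IH hs].
  split.
  - by move=> x; under eq_fun do rewrite big_nil; exact: cvg_cst.
  - by move=> x; rewrite big_nil ler01 lexx.
  - by move=> x i; rewrite in_nil.
  - by move=> x _; rewrite big_nil.
have [cj rj] := hs j (mem_head _ _).
case: IH => [i si|cs rs ls es]; first by apply: hs; rewrite in_cons si orbT.
split.
- move=> x; have h := @continuous_min R X (F j) _ x (cj x) (cs x).
  under eq_fun do rewrite big_cons.
  exact: h.
- move=> x; rewrite big_cons le_min ge_min.
  by case/andP: (rj x) => -> ->; case/andP: (rs x) => -> ->; rewrite !orbT.
- move=> x i; rewrite in_cons big_cons gt_min => /orP[/eqP -> -> //|si h].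
  by rewrite (ls x i si h) orbT.
- move=> x h; rewrite big_cons es; last by move=> i si; apply: h; rewrite in_cons si orbT.
  by rewrite h ?mem_head // minxx.
Qed.

Lemma sep_fun (X : ptopologicalType) (R : realType) (C O : set X) :
  locally_compact [set: X] -> hausdorff_space X -> compact C -> open O ->
  C `<=` O ->
  exists g : X -> R, [/\ continuous g, (forall x, 0 <= g x <= 1),
    (forall x, C x -> g x < 2^-1) & (forall x, ~ O x -> g x = 1)].
Proof.
move=> lc hs cC oO CO.
have crs := @locally_compact_completely_regular X R lc hs.
have hf : forall c, exists f : X -> R, C c ->
    [/\ continuous f, (forall x, 0 <= f x <= 1), f c = 0 &
        forall x, ~ O x -> f x = 1].
  move=> c; case: (pselect (C c)) => Cc; last by exists (fun=> 0).
  have : uniform_separator [set c] (~` O).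
    by apply: crs; [exact: open_closedC | move=> h; apply: h; exact: CO].
  case/(@uniform_separatorP _ R) => f [cf fr f0 f1]; exists f => _; split => //.
  - move=> x; have : range f (f x) by exists x.
    move/fr.
    by rewrite /= in_itv /=.
  - by apply: f0; exists c.
  - by move=> x nOx; apply: f1; exists x.
have [F hF] := choice hf.
have := cC; rewrite compact_cover => /(_ X C (fun i => F i @^-1` [set y | y < 2^-1])).
case.
- move=> i Ci; apply: open_comp; last exact: open_lt.
  by move=> x _; case: (hF i Ci).
- move=> c Cc; exists c => //=; case: (hF c Cc) => _ _ -> _.
  by rewrite invr_gt0 ltr0n.
move=> D' D'C Ccov.
have hs' : forall i, i \in D' -> continuous (F i) /\ forall x, 0 <= F i x <= 1.
  by move=> i /D'C /set_mem /hF [].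
have [c1 c2 c3 c4] := @bigmin_props X R F D' hs'.
exists (fun x => \big[Order.min/1]_(i <- D') F i x); split => //.
- move=> x /Ccov [i /= iD h]; exact: c3 iD h.
- move=> x nO; apply: c4 => i /D'C /set_mem Ci.
  by case: (hF i Ci) => _ _ _; apply.
Qed.

Lemma closed_meas (X : ptopologicalType) (A : set X) : closed A -> measurable (A : set (borel X)).
Proof.
move=> cA; rewrite -[A]setCK; apply: measurableC; apply: sub_sigma_algebra.
by rewrite /=; exact: closed_openC.
Qed.
Lemma open_meas (X : ptopologicalType) (A : set X) : open A -> measurable (A : set (borel X)).
Proof. by move=> oA; apply: sub_sigma_algebra. Qed.

Theorem proposition5 (R : realType) (G : ptopologicalType)
    (mul : G -> G -> G) (inv : G -> G) (e : G)
    (nu : {measure set (borel G) -> \bar R}) (U : set G) :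
  locally_compact_group mul inv e ->
  haar_measure mul nu ->
  open U -> U e -> (forall x, U x -> U (inv x)) -> compact (closure U) ->
  forall n : nat, exists K : set G,
    [/\ regular_compact K,
        setpow mul e U n `<=` K,
        K `<=` setpow mul e U n.+1 &
        nu (boundary K) = 0%E].
Proof.
move=> [TG hs lc] [_ cptfin _ _ _] oU Ue Us cU n.
have cQ m : compact (setpow mul e (closure U) m) by exact: (@setpow_compact _ _ _ _ TG _ m cU).
have PQ m : setpow mul e U m `<=` setpow mul e (closure U) m.
  by apply: (@setpow_sub _ _ _ _ _ m); exact: subset_closure.
have cC : compact (closure (setpow mul e U n)).
  apply: (subclosed_compact _ (cQ n)); first exact: closed_closure.
  by move=> x /(closureS (PQ n)) /(compact_closed hs (cQ n)).
have oO := @setpowS_open _ _ _ _ TG _ oU n.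
have CO := @closure_setpow _ _ _ _ TG _ oU Ue Us n.
have [g [cg g01 gC gO]] := @sep_fun G R _ _ lc hs cC oO CO.
pose D := setpow mul e (closure U) n.+1.
have mD : measurable (D : set (borel G)).
  by apply: closed_meas; apply: compact_closed => //; exact: cQ.
have Dfin : (nu D < +oo)%E by apply: cptfin; exact: cQ.
have clg (t : R) : closed (g @^-1` [set t]).
  by apply: closed_comp; [move=> x _; exact: cg | exact: closed_eq].
have mA t : measurable (D `&` g @^-1` [set t] : set (borel G)).
  by apply: measurableI => //; apply: closed_meas.
have [t [/andP [t1 t2] hnu]] := @level_null _ _ R nu g D mD Dfin mA.
pose K := closure [set x | g x < t].
have oLt : open [set x | g x < t].
  exact: (@open_comp _ _ g [set y : R | y < t] (fun x _ => cg x) (@open_lt _ t)).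
have LtI : [set x | g x < t] `<=` K°.
  by rewrite -open_subsetE //; exact: subset_closure.
have Kle : K `<=` [set x | g x <= t].
  have cle : closed [set x | g x <= t].
    exact: (@closed_comp _ _ g [set y : R | y <= t] (fun x _ => cg x) (@closed_le _ t)).
  move=> x /(closureS (A:=[set x | g x < t]) (B:=[set x | g x <= t])).
  by move=> /(_ (fun y (h : g y < t) => ltW h)) /cle.
have KO : K `<=` setpow mul e U n.+1.
  move=> x /Kle /= hx; have [//|nO] := pselect (setpow mul e U n.+1 x).
  by move: hx; rewrite (gO x nO) leNgt t2.
have clK : closed K by exact: closed_closure.
exists K; split.
- split.
    apply: subclosed_compact clK (cQ n.+1) _.
    by move=> x /KO; apply: PQ.
  apply/seteqP; split; first exact: closureS.
  by move=> x /(closureS (@interior_subset _ K)) /clK.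
- move=> x Px; apply: subset_closure => /=.
  by apply: lt_trans t1; apply: gC; exact: subset_closure.
- exact: KO.
- apply/eqP; rewrite eq_le measure_ge0 andbT -hnu.
  apply: le_measure; rewrite ?in_setE.
  + rewrite /boundary; apply: measurableD.
      by apply: closed_meas; exact: closed_closure.
    by apply: open_meas; exact: open_interior.
  + exact: mA.
  + move=> x [/clK Kx nIx]; split; first by apply: PQ; exact: KO.
    have := Kle _ Kx; rewrite /= le_eqVlt => /orP [/eqP //|lt].
    by exfalso; apply: nIx; exact: LtI.
Qed.
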